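(* Fix $A\in\mathbb R$, $T>0$ and $b\ge0$. There is $C=C(A,b,T)$, not depending on $\epsilon$, such that for all sufficiently small $\epsilon>0$, all $t\in[0,\epsilon^{-2}T]$, all $v\in[0,1]$, all $x,y\in\mathbb Z_{\ge0}$ and all integers $n$ with $|n|\le\lceil t^{1/2}\rceil$ and $x+n\ge0$, $$|\mathbf p_t^R(x+n,y)-\mathbf p_t^R(x,y)|\le C\,(1\wedge t^{-(1+v)/2})\,|n|^v\,e^{-b|x-y|(1\wedge t^{-1/2})}.$$ When $b=0$ this holds for all integers $n$ with $x+n\ge0$.
   Context: Let $p_t(x)$, $x\in\mathbb Z$, denote the whole-line semi-discrete heat kernel, i.e. the solution of $\partial_tp_t(x)=\frac12\Delta p_t(x)$, $p_0(x)=1_{\{x=0\}}$, where $\Delta f(x)=f(x+1)+f(x-1)-2f(x)$. For $\epsilon>0$ let $\mu_A=1-A\epsilon$. The half-line Robin heat kernel is, for $t\ge0$ and $x,y\in\mathbb Z_{\ge0}$, $$\mathbf p_t^R(x,y)=p_t(x-y)+\mu_Ap_t(x+y+1)+(1-\mu_A^{-2})\sum_{z=2}^\infty p_t(x+y+z)\mu_A^z.$$ *)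

(* Defs.v *)
From Stdlib Require Import Reals Lra Lia ZArith ClassicalEpsilon.
Open Scope R_scope.

(* Value of the series sum_{k>=0} f k, i.e. the limit of its partial sums
   (chosen by classical choice; meaningful when the series converges,
   which is the case for all series used below). *)
Definition series (f : nat -> R) : R :=
  epsilon (inhabits 0) (fun l => Un_cv (fun N => sum_f_R0 f N) l).

(* Whole-line semi-discrete heat kernel p_t(x) = e^{-t} I_{|x|}(t),
   the solution of d/dt p = (1/2) Delta p, p_0 = 1_{x=0}. *)
Definition heat (t : R) (x : Z) : R :=
  exp (- t) *
  series (fun k => (t / 2) ^ (2 * k + Z.abs_nat x)
                   / (INR (fact k) * INR (fact (k + Z.abs_nat x)))).

Definition muA (A eps : R) : R := 1 - A * eps.

Definition robin (A eps t : R) (x y : Z) : R :=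
  let mu := muA A eps in
  heat t (x - y) + mu * heat t (x + y + 1)
  + (1 - / (mu ^ 2)) *
    series (fun k => heat t (x + y + Z.of_nat (k + 2)) * mu ^ (k + 2)).

(* 1 /\ t^{-a} for t >= 0, a >= 0 (equal to 1 at t = 0, where t^{-a} = +oo). *)
Definition min1_negpow (t a : R) : R :=
  if Rlt_dec 0 t then Rmin 1 (Rpower t (- a)) else 1.

(* r^v for r >= 0, with 0^0 = 1 and 0^v = 0 for v > 0. *)
Definition rpow (r v : R) : R :=
  if Rlt_dec 0 r then Rpower r v else if Req_EM_T v 0 then 1 else 0.

(* Main.v *)
Require Import Defs.
From Stdlib Require Import Reals Lra Lia ZArith ClassicalEpsilon.
Open Scope R_scope.


Definition has_sum (f : nat -> R) (l : R) := Un_cv (fun N => sum_f_R0 f N) l.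

Lemma series_eq f l : has_sum f l -> series f = l.
Proof.
  intro H. unfold series.
  assert (E: exists l, Un_cv (fun N => sum_f_R0 f N) l) by (exists l; exact H).
  pose proof (epsilon_spec (inhabits 0) _ E) as H2.
  exact (UL_sequence _ _ _ H2 H).
Qed.

Lemma Rabs_le_inv a b : Rabs a <= b -> - b <= a <= b.
Proof. unfold Rabs; destruct (Rcase_abs a); intros; split; lra. Qed.

Lemma Rabs_ge a : - Rabs a <= a <= Rabs a.
Proof. unfold Rabs; destruct (Rcase_abs a); split; lra. Qed.

Lemma cv_const c : Un_cv (fun _ => c) c.
Proof. intros e he. exists 0%nat. intros. unfold R_dist. rewrite Rminus_diag, Rabs_R0. lra. Qed.

Lemma cv_le_bound u l B : Un_cv u l -> (forall n, u n <= B) -> l <= B.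
Proof. intros H Hb. exact (Rle_cv_lim Hb H (cv_const B)). Qed.

Lemma cv_ge_bound u l B : Un_cv u l -> (forall n, B <= u n) -> B <= l.
Proof. intros H Hb. exact (Rle_cv_lim Hb (cv_const B) H). Qed.

Lemma cv_abs_bound u l B : Un_cv u l -> (forall n, Rabs (u n) <= B) -> Rabs l <= B.
Proof.
  intros H Hb. apply Rabs_le. split.
  - apply (cv_ge_bound u); auto. intro n. specialize (Hb n). apply Rabs_le_inv in Hb. lra.
  - apply (cv_le_bound u); auto. intro n. specialize (Hb n). apply Rabs_le_inv in Hb. lra.
Qed.

Lemma cv_ext u v l : (forall n, u n = v n) -> Un_cv u l -> Un_cv v l.
Proof. intros E H e he. destruct (H e he) as [N HN]. exists N. intros n hn. rewrite <- E. auto. Qed.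

Lemma cv_scal u l c : Un_cv u l -> Un_cv (fun n => c * u n) (c * l).
Proof. intros H. apply (CV_mult (fun _ => c) u c l (cv_const c) H). Qed.

Lemma has_sum_ext f g l : (forall k, f k = g k) -> has_sum f l -> has_sum g l.
Proof. intros E H. apply (cv_ext (fun N => sum_f_R0 f N)); auto. intro n. apply sum_eq. auto. Qed.

Lemma has_sum_minus f g l1 l2 : has_sum f l1 -> has_sum g l2 ->
  has_sum (fun k => f k - g k) (l1 - l2).
Proof.
  intros H1 H2. unfold has_sum. apply (cv_ext (fun N => sum_f_R0 f N - sum_f_R0 g N)).
  intro n. rewrite minus_sum. auto. apply CV_minus; auto.
Qed.

Lemma has_sum_scal f l c : has_sum f l -> has_sum (fun k => c * f k) (c * l).
Proof.
  intros H. unfold has_sum. apply (cv_ext (fun N => c * sum_f_R0 f N)).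
  intro n. rewrite scal_sum. apply sum_eq. intros. ring. apply cv_scal; auto.
Qed.

Lemma has_sum_unique f l1 l2 : has_sum f l1 -> has_sum f l2 -> l1 = l2.
Proof. apply UL_sequence. Qed.

Lemma has_sum_nonneg f l : has_sum f l -> (forall k, 0 <= f k) -> 0 <= l.
Proof. intros H Hf. apply (cv_ge_bound _ _ 0 H). intro. apply cond_pos_sum; auto. Qed.

Lemma abs_conv f g lg : (forall k, Rabs (f k) <= g k) -> has_sum g lg ->
  exists l, has_sum f l /\ Rabs l <= lg.
Proof.
  intros Hfg Hg.
  assert (Gs : {l | Un_cv (fun N => sum_f_R0 g N) l}) by (exists lg; exact Hg).
  destruct (Rseries_CV_comp (fun k => (Rabs (f k) + f k)/2) g) as [lp Hp].
  { intro n. specialize (Hfg n). pose proof (Rabs_ge (f n)).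
    split; lra. }
  exact Gs.
  destruct (Rseries_CV_comp (fun k => (Rabs (f k) - f k)/2) g) as [lm Hm].
  { intro n. specialize (Hfg n). pose proof (Rabs_ge (f n)).
    split; lra. }
  exact Gs.
  exists (lp - lm). split.
  - apply (has_sum_ext (fun k => (Rabs (f k) + f k)/2 - (Rabs (f k) - f k)/2)).
    intro; field. apply has_sum_minus; auto.
  - apply (cv_abs_bound _ _ _ (has_sum_minus _ _ _ _ Hp Hm)).
    intro n. rewrite minus_sum.
    rewrite <- minus_sum.
    eapply Rle_trans. apply sum_f_R0_triangle.
    eapply Rle_trans. apply sum_Rle. intros. 2: apply (sum_incr g n lg Hg).
    2: { intro k. eapply Rle_trans. apply Rabs_pos. apply Hfg. }
    simpl. replace ((Rabs (f n0) + f n0) / 2 - (Rabs (f n0) - f n0) / 2) with (f n0) by field.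
    apply Hfg.
Qed.

Lemma exp_sum x : has_sum (fun k => x ^ k / INR (fact k)) (exp x).
Proof.
  unfold exp. destruct (exist_exp x) as [l Hl]. simpl.
  intros e he. destruct (Hl e he) as [N HN]. exists N. intros n hn.
  rewrite (sum_eq _ (fun i => / INR (fact i) * x ^ i)). auto.
  intros. unfold Rdiv. ring.
Qed.

Lemma term_le_sum g n : (forall k, 0 <= g k) -> g n <= sum_f_R0 g n.
Proof.
  intros Hg. destruct n. simpl; lra. rewrite tech5.
  pose proof (cond_pos_sum g n Hg). lra.
Qed.

Lemma exp_partial x N : 0 <= x -> sum_f_R0 (fun k => x ^ k / INR (fact k)) N <= exp x.
Proof.
  intros hx. apply sum_incr. apply exp_sum. intro k.
  apply Rmult_le_pos. apply pow_le; auto. left; apply Rinv_0_lt_compat, INR_fact_lt_0.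
Qed.

Lemma sum_shift_le (g : nat -> R) (Hg : forall k, 0 <= g k) i L :
  sum_f_R0 (fun l => g (i + l)%nat) L <= sum_f_R0 g (i + L).
Proof.
  induction L.
  - simpl. rewrite Nat.add_0_r. apply term_le_sum; auto.
  - rewrite tech5. replace (i + S L)%nat with (S (i + L)) by lia. rewrite tech5.
    replace (S (i+L)) with (i + S L)%nat by lia. lra.
Qed.

Lemma exp_pow_INR x n : exp x ^ n = exp (INR n * x).
Proof.
  induction n. simpl. rewrite Rmult_0_l, exp_0. auto.
  rewrite S_INR. simpl. rewrite IHn. rewrite <- exp_plus. f_equal. ring.
Qed.

Lemma exp_le_exp x y : x <= y -> exp x <= exp y.
Proof. intro h. destruct (Rle_lt_or_eq_dec _ _ h). left; apply exp_increasing; auto. subst; lra. Qed.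


Definition Q (mu : R) (j : nat) := exp (- mu) * mu ^ j / INR (fact j).

Lemma Q_nonneg mu j : 0 <= mu -> 0 <= Q mu j.
Proof.
  intro h. unfold Q. apply Rmult_le_pos. apply Rmult_le_pos. left; apply exp_pos.
  apply pow_le; auto. left; apply Rinv_0_lt_compat, INR_fact_lt_0.
Qed.

Lemma Q_shift_sum mu i L : 0 <= mu -> sum_f_R0 (fun l => Q mu (i + l)) L <= 1.
Proof.
  intro h. eapply Rle_trans. apply sum_shift_le. intro; apply Q_nonneg; auto.
  unfold Q. rewrite (sum_eq _ (fun k => (mu ^ k / INR (fact k)) * exp (- mu))).
  rewrite <- scal_sum. 
  rewrite <- (exp_0). replace 0 with (-mu + mu) by ring. rewrite exp_plus.
  apply Rmult_le_compat_l. left; apply exp_pos. apply exp_partial; auto.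
  intros. unfold Rdiv. ring.
Qed.

Lemma Q_sum mu N : 0 <= mu -> sum_f_R0 (Q mu) N <= 1.
Proof. intro h. pose proof (Q_shift_sum mu 0 N h). simpl in H. exact H. Qed.

Lemma Q_le1 mu j : 0 <= mu -> Q mu j <= 1.
Proof. intro h. pose proof (Q_shift_sum mu j 0 h). simpl in H. rewrite Nat.add_0_r in H. exact H. Qed.

Lemma Q_step mu j : Q mu (S j) = Q mu j * mu / INR (S j).
Proof.
  unfold Q. rewrite fact_simpl, mult_INR. simpl pow.
  pose proof (INR_fact_neq_0 j). assert (INR (S j) <> 0) by (apply not_0_INR; lia).
  field. auto.
Qed.

Lemma Q_incr mu j : 0 <= mu -> INR (S j) <= mu -> Q mu j <= Q mu (S j).
Proof.
  intros h1 h2. rewrite Q_step. pose proof (Q_nonneg mu j h1).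
  assert (0 < INR (S j)) by (apply lt_0_INR; lia).
  unfold Rdiv. rewrite Rmult_assoc. rewrite <- (Rmult_1_r (Q mu j)) at 1.
  apply Rmult_le_compat_l; auto.
  apply (Rmult_le_reg_r (INR (S j))); auto. rewrite Rmult_assoc, Rinv_l; lra.
Qed.

Lemma Q_decr mu j : 0 <= mu -> mu <= INR (S j) -> Q mu (S j) <= Q mu j.
Proof.
  intros h1 h2. rewrite Q_step. pose proof (Q_nonneg mu j h1).
  assert (0 < INR (S j)) by (apply lt_0_INR; lia).
  unfold Rdiv. rewrite Rmult_assoc. rewrite <- (Rmult_1_r (Q mu j)) at 2.
  apply Rmult_le_compat_l; auto.
  apply (Rmult_le_reg_r (INR (S j))); auto. rewrite Rmult_assoc, Rinv_l; lra.
Qed.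

Lemma bernoulli x n : 0 <= x <= 1 -> 1 - INR n * x <= (1 - x) ^ n.
Proof.
  intros hx. induction n.
  - simpl. lra.
  - rewrite S_INR. simpl. pose proof (pow_le (1-x) n ltac:(lra)).
    destruct (Rle_dec 0 (1 - INR n * x)).
    + assert (0 <= INR n) by apply pos_INR.
      assert (0 <= (1 - x) * ((1 - x) ^ n - (1 - INR n * x))) by (apply Rmult_le_pos; lra).
      nra.
    + assert (0 <= INR n) by apply pos_INR.
      assert (0 <= (1 - x) * (1 - x) ^ n) by (apply Rmult_le_pos; lra). nra.
Qed.

Lemma Q_tilt lam rho j : Q lam j * rho ^ j = exp (lam * (rho - 1)) * Q (lam * rho) j.
Proof.
  unfold Q. rewrite Rpow_mult_distr.
  replace (exp (- lam)) with (exp (lam * (rho - 1)) * exp (- (lam * rho))).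
  field. apply INR_fact_neq_0.
  rewrite <- exp_plus. f_equal. ring.
Qed.

Lemma Q_tv mu Mb a N : 0 <= mu -> (forall j, Q mu j <= Mb) ->
  sum_f_R0 (fun k => Rabs (Q mu (S (a + k)) - Q mu (a + k))) N <= 2 * Mb.
Proof.
  intros hmu HM.
  assert (Hinv : forall N, sum_f_R0 (fun k => Rabs (Q mu (S (a + k)) - Q mu (a + k))) N <=
     if Rle_dec (INR (S (a + N))) mu then Q mu (S (a + N)) else 2 * Mb - Q mu (S (a + N))).
  { induction N0.
    - simpl sum_f_R0. rewrite Nat.add_0_r.
      destruct (Rle_dec (INR (S a)) mu).
      + pose proof (Q_incr mu a hmu r). pose proof (Q_nonneg mu a hmu).
        rewrite Rabs_right; lra.
      + pose proof (Q_decr mu a hmu ltac:(lra)). pose proof (HM a). pose proof (Q_nonneg mu (S a) hmu).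
        rewrite Rabs_left1; lra.
    - rewrite tech5. replace (a + S N0)%nat with (S (a + N0)) by lia.
      destruct (Rle_dec (INR (S (a + N0))) mu) as [r1|r1] in IHN0;
      destruct (Rle_dec (INR (S (S (a + N0)))) mu) as [r2|r2].
      + pose proof (Q_incr mu _ hmu r2). rewrite Rabs_right; lra.
      + pose proof (Q_decr mu (S (a + N0)) hmu ltac:(lra)). pose proof (HM (S (a + N0))).
        rewrite Rabs_left1; lra.
      + exfalso. rewrite S_INR in r2. lra.
      + pose proof (Q_decr mu (S (a + N0)) hmu ltac:(lra)).
        rewrite Rabs_left1; lra. }
  specialize (Hinv N). pose proof (HM (S (a + N))). pose proof (Q_nonneg mu (S (a+N)) hmu).
  destruct (Rle_dec (INR (S (a + N))) mu); lra.
Qed.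

Lemma Q_local mu i : 0 <= mu -> Q mu i ^ 2 * mu <= 8.
Proof.
  intros hmu. destruct (Req_dec mu 0) as [e|ne].
  { subst. lra. }
  assert (hmu' : 0 < mu) by lra.
  pose (z := Int_part (sqrt mu / 2)).
  destruct (base_Int_part (sqrt mu / 2)) as [b1 b2]. fold z in b1, b2.
  assert (hs : 0 <= sqrt mu) by apply sqrt_pos.
  assert (hz : (0 <= z)%Z). { assert (IZR z > -1) by lra. 
     destruct (Z_lt_le_dec z 0); auto.
     assert (z <= -1)%Z by lia. apply IZR_le in H0. lra. }
  pose (L := Z.to_nat z).
  assert (HL : INR L = IZR z) by (unfold L; rewrite INR_IZR_INZ, Z2Nat.id; auto).
  assert (hsq : sqrt mu * sqrt mu = mu) by (apply sqrt_sqrt; lra).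
  assert (L1 : INR L <= sqrt mu / 2) by lra.
  assert (L2 : sqrt mu / 2 < INR L + 1) by lra.
  assert (HL0 : 0 <= INR L) by apply pos_INR.
  assert (L3 : 4 * INR L ^ 2 <= mu) by nra.
  assert (L4 : mu < 4 * (INR L + 1) ^ 2) by nra.
  assert (L5 : INR L <= mu). { destruct (Nat.eq_dec L 0) as [e|e].
     rewrite e; simpl; lra. assert (1 <= INR L) by (apply (le_INR 1); lia). nra. }
  assert (Key : 3 / 4 * (INR L + 1) * Q mu i <= 1).
  { pose proof (Q_nonneg mu i hmu) as Qi.
    destruct (Rle_dec (INR i) mu) as [hi|hi].
    -
      set (r := mu / (mu + INR L)).
      assert (hr : r = 1 - INR L / (mu + INR L)) by (unfold r; field; lra).
      assert (Step : forall l, (l <= L)%nat -> r ^ l * Q mu i <= Q mu (i + l)).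
      { induction l; intros hl.
        - simpl. rewrite Nat.add_0_r. lra.
        - replace (i + S l)%nat with (S (i + l)) by lia. rewrite Q_step.
          assert (IH := IHl ltac:(lia)). simpl pow.
          assert (hl' : INR (S l) <= INR L) by (apply le_INR; lia).
          assert (h1 : INR (S (i + l)) <= mu + INR L) by (rewrite S_INR, plus_INR; rewrite S_INR in hl'; lra).
          assert (h0 : 0 < INR (S (i + l))) by (apply lt_0_INR; lia).
          assert (0 <= r) by (unfold r; apply Rmult_le_pos; [lra| left; apply Rinv_0_lt_compat; lra]).
          assert (r <= mu / INR (S (i + l))).
          { unfold r. unfold Rdiv. apply Rmult_le_compat_l. lra. apply Rinv_le_contravar; lra. }
          pose proof (Q_nonneg mu (i + l) hmu).
          pose proof (pow_le r l H).
          unfold Rdiv in *. 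
          apply Rle_trans with (r * Q mu (i + l)). nra. 
          replace (Q mu (i+l) * mu * / INR (S (i+l))) with ((mu * / INR (S (i+l))) * Q mu (i+l)) by ring.
          apply Rmult_le_compat_r; lra. }
      assert (Each : forall l, (l <= L)%nat -> 3/4 * Q mu i <= Q mu (i + l)).
      { intros l hl. eapply Rle_trans. 2: apply Step; auto.
        apply Rmult_le_compat_r; auto.
        rewrite hr. eapply Rle_trans. 2: apply bernoulli.
        - assert (INR l <= INR L) by (apply le_INR; auto).
          assert (INR l * (INR L / (mu + INR L)) <= INR L * INR L / mu).
          { unfold Rdiv. apply Rle_trans with (INR L * (INR L * / (mu + INR L))).
            apply Rmult_le_compat_r; auto. apply Rmult_le_pos; auto. left; apply Rinv_0_lt_compat; lra.
            rewrite <- Rmult_assoc. apply Rmult_le_compat_l. nra. apply Rinv_le_contravar; lra. }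
          assert (INR L * INR L / mu <= 1/4).
          { apply (Rmult_le_reg_r mu); auto. unfold Rdiv. rewrite Rmult_assoc, Rinv_l; lra. }
          lra.
        - split. unfold Rdiv. apply Rmult_le_pos; auto. left; apply Rinv_0_lt_compat; lra.
          apply (Rmult_le_reg_r (mu + INR L)). lra. unfold Rdiv. rewrite Rmult_assoc, Rinv_l; lra. }
      pose proof (Q_shift_sum mu i L hmu).
      assert (sum_f_R0 (fun _ => 3/4 * Q mu i) L <= sum_f_R0 (fun l => Q mu (i + l)) L)
        by (apply sum_Rle; auto).
      rewrite sum_cte, S_INR in H0. lra.
    -
      assert (hLi : (L <= i)%nat) by (apply INR_le; lra).
      set (r := (mu - INR L) / mu).
      assert (hr : r = 1 - INR L / mu) by (unfold r; field; lra).
      assert (Step : forall d, (d <= L)%nat -> r ^ d * Q mu i <= Q mu (i - d)).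
      { induction d; intros hd.
        - simpl. rewrite Nat.sub_0_r. lra.
        - assert (IH := IHd ltac:(lia)).
          assert (E : Q mu (i - d) = Q mu (i - S d) * mu / INR (i - d)).
          { replace (i - d)%nat with (S (i - S d)) at 1 by lia. rewrite Q_step.
            f_equal. f_equal. f_equal. lia. }
          assert (hd' : INR (S d) <= INR L) by (apply le_INR; lia).
          assert (h1 : mu - INR L <= INR (i - d)).
          { rewrite minus_INR by lia. rewrite S_INR in hd'. lra. }
          assert (h0 : 0 < INR (i - d)) by (apply lt_0_INR; lia).
          assert (0 <= r) by (unfold r; apply Rmult_le_pos; [lra| left; apply Rinv_0_lt_compat; lra]).
          pose proof (Q_nonneg mu (i - S d) hmu).
          assert (Q mu (i - d) * r <= Q mu (i - S d)).
          { rewrite E. unfold r. unfold Rdiv.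
            replace (Q mu (i - S d) * mu * / INR (i - d) * ((mu - INR L) * / mu))
              with (Q mu (i - S d) * ((mu - INR L) / INR (i - d))) by (field; lra).
            rewrite <- (Rmult_1_r (Q mu (i - S d))) at 2. apply Rmult_le_compat_l; auto.
            apply (Rmult_le_reg_r (INR (i - d))); auto. unfold Rdiv. rewrite Rmult_assoc, Rinv_l; lra. }
          simpl pow. pose proof (pow_le r d H). nra. }
      assert (Each : forall l, (l <= L)%nat -> 3/4 * Q mu i <= Q mu ((i - L) + l)).
      { intros l hl. replace (i - L + l)%nat with (i - (L - l))%nat by lia.
        eapply Rle_trans. 2: apply Step; lia.
        apply Rmult_le_compat_r; auto.
        rewrite hr. eapply Rle_trans. 2: apply bernoulli.
        - assert (INR (L - l) <= INR L) by (apply le_INR; lia).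
          assert (0 <= INR (L - l)) by apply pos_INR.
          assert (INR (L - l) * (INR L / mu) <= INR L * INR L / mu).
          { unfold Rdiv. rewrite <- Rmult_assoc. apply Rmult_le_compat_r.
            left; apply Rinv_0_lt_compat; lra. nra. }
          assert (INR L * INR L / mu <= 1/4).
          { apply (Rmult_le_reg_r mu); auto. unfold Rdiv. rewrite Rmult_assoc, Rinv_l; lra. }
          lra.
        - split. unfold Rdiv. apply Rmult_le_pos; auto. left; apply Rinv_0_lt_compat; lra.
          apply (Rmult_le_reg_r mu). lra. unfold Rdiv. rewrite Rmult_assoc, Rinv_l; lra. }
      pose proof (Q_shift_sum mu (i - L) L hmu).
      assert (sum_f_R0 (fun _ => 3/4 * Q mu i) L <= sum_f_R0 (fun l => Q mu (i - L + l)) L)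
        by (apply sum_Rle; auto).
      rewrite sum_cte, S_INR in H0. lra. }
  pose proof (Q_nonneg mu i hmu).
  assert (Q mu i * (INR L + 1) <= 4/3) by lra.
  assert (0 <= Q mu i * (INR L + 1)) by nra.
  assert ((Q mu i * (INR L + 1))^2 <= 16/9) by nra.
  nra.
Qed.


Lemma heat_sum t w : 0 <= t ->
  has_sum (fun k => Q (t/2) k * Q (t/2) (k + Z.abs_nat w)) (heat t w).
Proof.
  intros ht. set (a := Z.abs_nat w). set (lam := t/2).
  set (f := fun k => (t / 2) ^ (2 * k + a) / (INR (fact k) * INR (fact (k + a)))).
  set (g := fun k => exp lam * (lam ^ k / INR (fact k))).
  assert (hlam : 0 <= lam) by (unfold lam; lra).
  assert (Hg : has_sum g (exp lam * exp lam)) by (apply has_sum_scal, exp_sum).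
  assert (Hfg : forall k, 0 <= f k <= g k).
  { intro k. unfold f, g. fold lam.
    assert (0 < INR (fact k)) by apply INR_fact_lt_0.
    assert (0 < INR (fact (k+a))) by apply INR_fact_lt_0.
    assert (E : lam ^ (2 * k + a) / (INR (fact k) * INR (fact (k + a))) =
      (lam ^ k / INR (fact k)) * (lam ^ (k + a) / INR (fact (k + a)))).
    { replace (2 * k + a)%nat with (k + (k + a))%nat by lia. rewrite pow_add. field; lra. }
    rewrite E.
    assert (0 <= lam ^ k / INR (fact k)) by (apply Rmult_le_pos; [apply pow_le; auto| left; apply Rinv_0_lt_compat; auto]).
    assert (0 <= lam ^ (k+a) / INR (fact (k+a))) by (apply Rmult_le_pos; [apply pow_le; auto| left; apply Rinv_0_lt_compat; auto]).
    assert (lam ^ (k+a) / INR (fact (k+a)) <= exp lam).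
    { eapply Rle_trans. apply (term_le_sum (fun k => lam ^ k / INR (fact k))).
      intro j. apply Rmult_le_pos; [apply pow_le; auto| left; apply Rinv_0_lt_compat; apply INR_fact_lt_0].
      apply exp_partial; auto. }
    split. apply Rmult_le_pos; auto. rewrite Rmult_comm. apply Rmult_le_compat_r; auto. }
  destruct (Rseries_CV_comp f g Hfg) as [l Hl]. exists (exp lam * exp lam). exact Hg.
  unfold heat. fold a. fold f. rewrite (series_eq f l Hl).
  apply (has_sum_ext (fun k => exp (- t) * f k)).
  2: apply has_sum_scal; exact Hl.
  intro k. unfold f, Q. fold lam.
  replace (exp (-t)) with (exp (- lam) * exp (- lam)) by (rewrite <- exp_plus; f_equal; unfold lam; lra).
  replace (2 * k + a)%nat with (k + (k + a))%nat by lia. rewrite pow_add.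
  pose proof (INR_fact_neq_0 k). pose proof (INR_fact_neq_0 (k+a)).
  field; auto.
Qed.

Lemma heat_nonneg t w : 0 <= t -> 0 <= heat t w.
Proof.
  intro ht. apply (has_sum_nonneg _ _ (heat_sum t w ht)). intro k.
  apply Rmult_le_pos; apply Q_nonneg; lra.
Qed.

Lemma heat_opp t w : heat t (- w) = heat t w.
Proof. unfold heat. replace (Z.abs_nat (- w)) with (Z.abs_nat w) by (destruct w; reflexivity). auto. Qed.

Lemma heat_H0_core t w rho Mb : 0 <= t -> 0 < rho ->
  (forall j, Q (t/2 * rho) j <= Mb) ->
  heat t w * rho ^ (Z.abs_nat w) <=
  exp (t/2 * (rho + / rho - 2)) * Mb.
Proof.
  intros ht hr HM. set (a := Z.abs_nat w). set (lam := t/2).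
  assert (hlam : 0 <= lam) by (unfold lam; lra).
  pose proof (heat_sum t w ht) as Hs. fold a lam in Hs.
  apply (cv_le_bound (fun N => rho ^ a * sum_f_R0 (fun k => Q lam k * Q lam (k + a)) N)).
  rewrite Rmult_comm. apply cv_scal. exact Hs.
  intro N. rewrite scal_sum.
  assert (Hir : 0 < / rho) by (apply Rinv_0_lt_compat; auto).
  apply Rle_trans with (sum_f_R0 (fun k => exp (t / 2 * (rho + / rho - 2)) * Mb * Q (lam * / rho) k) N).
  - apply sum_Rle. intros k _.
    assert (E : Q lam k * Q lam (k + a) * rho ^ a =
      (Q lam k * (/ rho) ^ k) * (Q lam (k + a) * rho ^ (k + a))).
    { rewrite pow_add. rewrite pow_inv. field. apply pow_nonzero. lra. }
    rewrite E, !Q_tilt.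
    pose proof (Q_nonneg (lam * / rho) k ltac:(apply Rmult_le_pos; lra)).
    pose proof (HM (k + a)%nat). fold lam in H0.
    replace (exp (t / 2 * (rho + / rho - 2))) with (exp (lam * (/ rho - 1)) * exp (lam * (rho - 1)))
      by (rewrite <- exp_plus; f_equal; unfold lam; ring).
    pose proof (exp_pos (lam * (/ rho - 1))). pose proof (exp_pos (lam * (rho - 1))).
    pose proof (Q_nonneg (lam * rho) (k+a) ltac:(apply Rmult_le_pos; lra)).
    assert (Q (lam * rho) (k + a) * Q (lam * / rho) k <= Mb * Q (lam * / rho) k) by (apply Rmult_le_compat_r; auto).
    match goal with |- ?e1 * ?A * (?e2 * ?B) <= _ => 
      replace (e1 * A * (e2 * B)) with ((e1 * e2) * (B * A)) by ring;
      replace (e1 * e2 * Mb * A) with ((e1 * e2) * (Mb * A)) by ring end.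
    apply Rmult_le_compat_l; auto. apply Rmult_le_pos; lra.
  - rewrite (sum_eq _ (fun k => Q (lam * / rho) k * (exp (t / 2 * (rho + / rho - 2)) * Mb))) by (intros; ring).
    rewrite <- scal_sum. pose proof (Q_sum (lam * / rho) N ltac:(apply Rmult_le_pos; lra)).
    pose proof (exp_pos (t / 2 * (rho + / rho - 2))).
    assert (0 <= Mb) by (eapply Rle_trans; [apply (Q_nonneg (t/2*rho) 0); apply Rmult_le_pos; lra| apply HM]).
    match goal with |- ?x * ?S <= ?y => assert (0 <= x) by (apply Rmult_le_pos; lra);
      apply Rle_trans with (x * 1); [apply Rmult_le_compat_l; auto | unfold lam; lra] end.
Qed.

Lemma heat_H1_core t a rho Mb1 Mb2 : 0 <= t -> 1 <= rho ->
  (forall j, Q (t/2 * / rho) j <= Mb1) ->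
  (forall j, Q (t/2 * rho) j <= Mb2) ->
  Rabs (heat t (Z.of_nat (S a)) - heat t (Z.of_nat a)) * rho ^ a <=
  exp (t/2 * (rho + / rho - 2)) * Mb1 * (2 * Mb2 + (1 - / rho)).
Proof.
  intros ht hr HM1 HM2. set (lam := t/2).
  assert (hlam : 0 <= lam) by (unfold lam; lra).
  assert (Hir : 0 < / rho) by (apply Rinv_0_lt_compat; lra).
  assert (Hir1 : / rho <= 1) by (rewrite <- Rinv_1; apply Rinv_le_contravar; lra).
  pose proof (heat_sum t (Z.of_nat (S a)) ht) as H1. pose proof (heat_sum t (Z.of_nat a) ht) as H0.
  rewrite Zabs2Nat.id in H1, H0. fold lam in H1, H0.
  pose proof (has_sum_minus _ _ _ _ H1 H0) as Hd.
  assert (hpa : 0 < rho ^ a) by (apply pow_lt; lra).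
  rewrite <- (Rabs_right (rho ^ a)) by lra. rewrite <- Rabs_mult.
  set (e := exp (t / 2 * (rho + / rho - 2))).
  assert (he : 0 < e) by apply exp_pos.
  assert (hm1 : 0 <= Mb1) by (eapply Rle_trans; [apply (Q_nonneg (t/2 * / rho) 0); apply Rmult_le_pos; lra| apply HM1]).
  assert (hm2 : 0 <= Mb2) by (eapply Rle_trans; [apply (Q_nonneg (t/2 * rho) 0); apply Rmult_le_pos; lra| apply HM2]).
  set (Q' := Q (lam * rho)). set (Q'' := Q (lam * / rho)).
  apply (cv_abs_bound (fun N => sum_f_R0 (fun k => (Q lam k * Q lam (k + S a) - Q lam k * Q lam (k + a)) * rho ^ a) N)).
  { apply (cv_ext (fun N => rho ^ a * sum_f_R0 (fun k => Q lam k * Q lam (k + S a) - Q lam k * Q lam (k + a)) N)).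
    intro n. rewrite scal_sum. auto. rewrite Rmult_comm. apply cv_scal. exact Hd. }
  intro N. eapply Rle_trans. apply sum_f_R0_triangle.
  apply Rle_trans with (sum_f_R0 (fun k => e * Mb1 * (Rabs (Q' (S (a + k)) - Q' (a + k)%nat) + (1 - / rho) * Q' (S a + k)%nat)) N).
  - apply sum_Rle. intros k _.
    assert (E : (Q lam k * Q lam (k + S a) - Q lam k * Q lam (k + a)) * rho ^ a =
      (Q lam k * (/ rho) ^ k) * ((Q lam (S (a + k)) * rho ^ (S (a + k))) * / rho - Q lam (a + k)%nat * rho ^ (a + k)%nat)).
    { replace (k + S a)%nat with (S (a + k)) by lia. replace (k + a)%nat with (a + k)%nat by lia.
      rewrite pow_inv. simpl pow. rewrite pow_add. field; repeat split; (apply pow_nonzero; lra) || lra. }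
    rewrite E, !Q_tilt. fold Q' Q''.
    replace (S a + k)%nat with (S (a + k)) by lia.
    set (j := (a + k)%nat).
    assert (E2 : exp (lam * (/ rho - 1)) * Q'' k * (exp (lam * (rho - 1)) * Q' (S j) * / rho - exp (lam * (rho - 1)) * Q' j)
       = e * Q'' k * ((Q' (S j) - Q' j) - (1 - / rho) * Q' (S j))).
    { unfold e. replace (t / 2 * (rho + / rho - 2)) with (lam * (/ rho - 1) + lam * (rho - 1)) by (unfold lam; ring).
      rewrite exp_plus. field. lra. }
    rewrite E2. rewrite Rabs_mult. rewrite Rabs_right.
    2: { apply Rle_ge, Rmult_le_pos; [lra| apply Q_nonneg; apply Rmult_le_pos; lra]. }
    assert (Hq : Q'' k <= Mb1) by apply HM1.
    assert (0 <= Q'' k) by (apply Q_nonneg; apply Rmult_le_pos; lra).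
    assert (0 <= Q' (S j)) by (apply Q_nonneg; apply Rmult_le_pos; lra).
    assert (Rabs (Q' (S j) - Q' j - (1 - / rho) * Q' (S j)) <= Rabs (Q' (S j) - Q' j) + (1 - / rho) * Q' (S j)).
    { eapply Rle_trans. apply Rabs_triang. rewrite Rabs_Ropp, (Rabs_right ((1 - / rho) * Q' (S j))). lra.
      apply Rle_ge, Rmult_le_pos; lra. }
    assert (0 <= Rabs (Q' (S j) - Q' j) + (1 - / rho) * Q' (S j)).
    { pose proof (Rabs_pos (Q' (S j) - Q' j)). assert (0 <= (1 - / rho) * Q' (S j)) by (apply Rmult_le_pos; lra). lra. }
    apply Rle_trans with (e * Q'' k * (Rabs (Q' (S j) - Q' j) + (1 - / rho) * Q' (S j))).
    apply Rmult_le_compat_l; auto. apply Rmult_le_pos; lra.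
    apply Rmult_le_compat_r; auto. apply Rmult_le_compat_l; lra.
  - rewrite (sum_eq _ (fun k => (Rabs (Q' (S (a + k)) - Q' (a + k)%nat) + (1 - / rho) * Q' (S a + k)%nat) * (e * Mb1))) by (intros; ring).
    rewrite <- scal_sum. rewrite plus_sum.
    rewrite (sum_eq (fun i => (1 - / rho) * Q' (S a + i)%nat) (fun i => Q' (S a + i)%nat * (1 - / rho))) by (intros; ring).
    rewrite <- scal_sum.
    pose proof (Q_tv (lam * rho) Mb2 a N ltac:(apply Rmult_le_pos; lra) HM2). fold Q' in H.
    pose proof (Q_shift_sum (lam * rho) (S a) N ltac:(apply Rmult_le_pos; lra)). fold Q' in H2.
    assert ((1 - / rho) * sum_f_R0 (fun l => Q' (S a + l)%nat) N <= (1 - / rho)) .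
    { rewrite <- (Rmult_1_r (1 - / rho)) at 2. apply Rmult_le_compat_l; lra. }
    unfold e, lam in *. apply Rmult_le_compat_l. apply Rmult_le_pos; lra. lra.
Qed.


Definition sprop (s t : R) := 0 < s <= 1 /\ t * s ^ 2 <= 1 /\ (s = 1 \/ t * s ^ 2 = 1).

Lemma Mb_s t s c mu : 0 <= t -> sprop s t -> 0 < c -> c * t <= mu ->
  forall j, Q mu j <= (1 + 8 / c) * s.
Proof.
  intros ht [hs [hts hor]] hc hmu j.
  assert (hmu0 : 0 <= mu) by nra.
  pose proof (Q_le1 mu j hmu0). pose proof (Q_local mu j hmu0). pose proof (Q_nonneg mu j hmu0).
  assert (h8 : 0 < 8 / c) by (unfold Rdiv; apply Rmult_lt_0_compat; [lra| apply Rinv_0_lt_compat; lra]).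
  destruct hor as [e|e].
  - subst. lra.
  - set (K := 1 + 8 / c).
    assert (Q mu j ^ 2 * c <= 8 * s ^ 2).
    { assert (Q mu j ^ 2 * (c * t) <= 8).
      { eapply Rle_trans. 2: apply H0. apply Rmult_le_compat_l. nra. auto. }
      replace (Q mu j ^ 2 * c) with (Q mu j ^ 2 * (c * t) * s ^ 2) by (replace (Q mu j ^ 2 * (c * t) * s ^ 2) with (Q mu j ^ 2 * c * (t * s ^ 2)) by ring; rewrite e; ring).
      apply Rmult_le_compat_r. nra. auto. }
    assert (Q mu j ^ 2 <= 8 / c * s ^ 2).
    { apply (Rmult_le_reg_r c); auto. unfold Rdiv. 
      replace (8 * / c * s ^ 2 * c) with (8 * s ^ 2) by (field; lra). auto. }
    assert (8 / c <= K * K) by (unfold K; nra).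
    assert (Q mu j ^ 2 <= (K * s) ^ 2) by nra.
    assert (0 <= K * s) by (unfold K; nra).
    apply Rsqr_incr_0_var. unfold Rsqr. nra. auto.
Qed.

Lemma cosh_bound th : 0 <= th -> exp th + / exp th - 2 <= th ^ 2 * exp th.
Proof.
  intros h. set (r := exp th).
  assert (hr : 1 <= r) by (unfold r; pose proof (exp_ineq1_le th); lra).
  assert (h1 : 1 - th <= / r) by (unfold r; rewrite <- exp_Ropp; pose proof (exp_ineq1_le (- th)); lra).
  assert (h2 : r - th * r <= 1).
  { apply (Rmult_le_compat_r r) in h1; [|lra]. rewrite Rinv_l in h1; lra. }
  assert (E : r + / r - 2 = (r - 1) ^ 2 / r) by (field; lra).
  rewrite E. apply (Rmult_le_reg_r r). lra. unfold Rdiv. rewrite Rmult_assoc, Rinv_l by lra.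
  assert (0 <= r - 1 <= th * r) by lra. nra.
Qed.

Lemma INR_abs_nat w : INR (Z.abs_nat w) = Rabs (IZR w).
Proof. rewrite INR_IZR_INZ, Nat2Z.inj_abs_nat, abs_IZR. auto. Qed.



Lemma expo_bound t s be : 0 <= t -> sprop s t -> 0 <= be ->
  exp (t / 2 * (exp (be * s) + / exp (be * s) - 2)) <= exp (be ^ 2 * exp be / 2).
Proof.
  intros ht [hs [hts _]] hb.
  assert (hbs : 0 <= be * s) by nra.
  pose proof (cosh_bound (be * s) hbs).
  assert (exp (be * s) <= exp be) by (apply exp_le_exp; nra).
  assert (0 < exp (be * s)) by apply exp_pos.
  assert (t * (be * s) ^ 2 <= be ^ 2) by (replace (t * (be * s) ^ 2) with (be ^ 2 * (t * s ^ 2)) by ring; nra).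
  apply exp_le_exp.
  apply Rle_trans with (t / 2 * ((be * s) ^ 2 * exp (be * s))). apply Rmult_le_compat_l; lra.
  assert (0 <= t * (be * s) ^ 2) by (apply Rmult_le_pos; [lra| apply pow2_ge_0]).
  assert (t * (be * s) ^ 2 * exp (be * s) <= be ^ 2 * exp be).
  { apply Rle_trans with (be ^ 2 * exp (be * s)). apply Rmult_le_compat_r; lra.
    apply Rmult_le_compat_l; nra. }
  lra.
Qed.

Lemma H0s be : 0 <= be -> exists K, 0 < K /\ forall t s w, 0 <= t -> sprop s t ->
  heat t w <= K * s * exp (- (be * s * Rabs (IZR w))).
Proof.
  intros hb. exists (17 * exp (be ^ 2 * exp be / 2)). split. pose proof (exp_pos (be ^ 2 * exp be / 2)). lra.
  intros t s w ht hsp.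
  pose proof hsp as [hs [hts _]].
  set (rho := exp (be * s)).
  assert (hr : 1 <= rho) by (unfold rho; pose proof (exp_ineq1_le (be * s)); nra).
  assert (HM : forall j, Q (t / 2 * rho) j <= (1 + 8 / (1/2)) * s).
  { apply Mb_s with t; auto. lra. nra. }
  pose proof (heat_H0_core t w rho _ ht ltac:(lra) HM) as Hc.
  pose proof (expo_bound t s be ht hsp hb) as He. fold rho in He.
  assert (Ea : rho ^ Z.abs_nat w = exp (be * s * Rabs (IZR w))).
  { unfold rho. rewrite exp_pow_INR, INR_abs_nat. f_equal. ring. }
  rewrite Ea in Hc. rewrite exp_Ropp.
  pose proof (exp_pos (be * s * Rabs (IZR w))).
  apply (Rmult_le_reg_r (exp (be * s * Rabs (IZR w)))); auto.
  match goal with |- _ <= ?A * / ?E * ?E => replace (A * / E * E) with A by (field; lra) end.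
  eapply Rle_trans. apply Hc.
  replace ((1 + 8 / (1 / 2)) * s) with (17 * s) by field.
  pose proof (exp_pos (t / 2 * (rho + / rho - 2))). nra.
Qed.

Lemma H1s_nat be : 0 <= be -> exists K, 0 < K /\ forall t s a, 0 <= t -> sprop s t ->
  Rabs (heat t (Z.of_nat (S a)) - heat t (Z.of_nat a)) <= K * s ^ 2 * exp (- (be * s * INR a)).
Proof.
  intros hb. set (c1 := exp (- be) / 2).
  assert (hc1 : 0 < c1) by (unfold c1; pose proof (exp_pos (- be)); lra).
  exists (exp (be ^ 2 * exp be / 2) * (1 + 8 / c1) * (34 + be)). split.
  { pose proof (exp_pos (be ^ 2 * exp be / 2)).
    assert (0 < 8 / c1) by (unfold Rdiv; apply Rmult_lt_0_compat; [lra| apply Rinv_0_lt_compat; lra]).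
    apply Rmult_lt_0_compat. apply Rmult_lt_0_compat; lra. lra. }
  intros t s a ht hsp.
  pose proof hsp as [hs [hts _]].
  set (rho := exp (be * s)).
  assert (hr : 1 <= rho) by (unfold rho; pose proof (exp_ineq1_le (be * s)); nra).
  assert (hir : exp (- be) <= / rho) by (unfold rho; rewrite <- exp_Ropp; apply exp_le_exp; nra).
  assert (hir2 : 1 - be * s <= / rho) by (unfold rho; rewrite <- exp_Ropp; pose proof (exp_ineq1_le (- (be * s))); lra).
  assert (HM2 : forall j, Q (t / 2 * rho) j <= (1 + 8 / (1/2)) * s).
  { apply Mb_s with t; auto. lra. nra. }
  assert (HM1 : forall j, Q (t / 2 * / rho) j <= (1 + 8 / c1) * s).
  { apply Mb_s with t; auto. unfold c1. 
    assert (0 < / rho) by (apply Rinv_0_lt_compat; lra). nra. }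
  pose proof (heat_H1_core t a rho _ _ ht hr HM1 HM2) as Hc.
  pose proof (expo_bound t s be ht hsp hb) as He. fold rho in He.
  assert (Ea : rho ^ a = exp (be * s * INR a)).
  { unfold rho. rewrite exp_pow_INR. f_equal. ring. }
  rewrite Ea in Hc. rewrite exp_Ropp.
  pose proof (exp_pos (be * s * INR a)).
  apply (Rmult_le_reg_r (exp (be * s * INR a))); auto.
  match goal with |- _ <= ?A * / ?E * ?E => replace (A * / E * E) with A by (field; lra) end.
  eapply Rle_trans. apply Hc.
  replace ((1 + 8 / (1 / 2)) * s) with (17 * s) by field.
  assert (h8 : 0 < 8 / c1) by (unfold Rdiv; apply Rmult_lt_0_compat; [lra| apply Rinv_0_lt_compat; lra]).
  assert (0 <= (1 + 8 / c1) * s) by nra.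
  assert (2 * (17 * s) + (1 - / rho) <= (34 + be) * s) by lra.
  assert (0 <= 2 * (17 * s) + (1 - / rho)) by (assert (/rho <= 1) by (rewrite <- Rinv_1; apply Rinv_le_contravar; lra); lra).
  pose proof (exp_pos (t / 2 * (rho + / rho - 2))).
  apply Rle_trans with (exp (be ^ 2 * exp be / 2) * ((1 + 8 / c1) * s) * ((34 + be) * s)).
  apply Rmult_le_compat. apply Rmult_le_pos; lra. auto. apply Rmult_le_compat_r; lra. auto.
  right. ring.
Qed.

Lemma H1s be : 0 <= be -> exists K, 0 < K /\ forall t s w, 0 <= t -> sprop s t ->
  Rabs (heat t (w + 1) - heat t w) <= K * s ^ 2 * exp (- (be * s * Rabs (IZR w))).
Proof.
  intros hb. destruct (H1s_nat be hb) as [K [hK HK]].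
  exists (K * exp be). split. pose proof (exp_pos be). nra.
  intros t s w ht hsp. pose proof hsp as [hs [hts _]].
  pose proof (exp_pos be).
  destruct (Z_le_gt_dec 0 w) as [hw|hw].
  - pose (a := Z.to_nat w). assert (Ew : w = Z.of_nat a) by (unfold a; rewrite Z2Nat.id; lia).
    assert (Ew1 : (w + 1)%Z = Z.of_nat (S a)) by lia.
    rewrite Ew1. pose proof (HK t s a ht hsp).
    assert (Rabs (IZR w) = INR a) by (rewrite Ew, <- INR_IZR_INZ; apply Rabs_right; apply Rle_ge, pos_INR).
    rewrite H1. rewrite Ew. eapply Rle_trans. apply H0.
    assert (0 <= K * s ^ 2 * exp (- (be * s * INR a))) by (apply Rmult_le_pos; [apply Rmult_le_pos; [lra| apply pow2_ge_0]| left; apply exp_pos]).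
    assert (1 <= exp be) by (pose proof (exp_ineq1_le be); lra).
    nra.
  - pose (a := Z.to_nat (- w - 1)). 
    assert (Ew : w = (- Z.of_nat (S a))%Z) by (unfold a; rewrite Nat2Z.inj_succ, Z2Nat.id; lia).
    assert (Ew1 : (w + 1)%Z = (- Z.of_nat a)%Z) by (rewrite Ew, Nat2Z.inj_succ; lia).
    rewrite Ew1, Ew, !heat_opp. rewrite Rabs_minus_sym.
    pose proof (HK t s a ht hsp).
    assert (Rabs (IZR (- Z.of_nat (S a))) = INR a + 1) by (rewrite Rabs_Zabs, Z.abs_opp, Z.abs_eq, <- INR_IZR_INZ, S_INR; lia || auto; lia).
    rewrite H1. eapply Rle_trans. apply H0.
    replace (- (be * s * (INR a + 1))) with (- (be * s * INR a) + - (be * s)) by ring.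
    rewrite exp_plus.
    assert (exp (- (be * s)) * exp be >= 1).
    { rewrite <- exp_plus. pose proof (exp_ineq1_le (- (be * s) + be)). nra. }
    pose proof (exp_pos (- (be * s * INR a))). pose proof (exp_pos (- (be * s))).
    assert (0 <= K * s ^ 2 * exp (- (be * s * INR a))) by (apply Rmult_le_pos; [apply Rmult_le_pos; [lra| apply pow2_ge_0]| left; apply exp_pos]).
    nra.
Qed.


Definition hyp (A T b eps t s : R) :=
  0 < T /\ 0 <= b /\ 0 < eps <= 1 /\ Rabs A * eps <= 1/2 /\ 0 <= t /\ sprop s t /\ eps <= s * (T + 1).

Definition beta0 (A T : R) := (Rabs A + 1) * (T + 1).

Lemma geo_sum r M : 0 <= r < 1 -> has_sum (fun k => M * r ^ k) (M / (1 - r)).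
Proof.
  intros hr. assert (Rabs r < 1) by (rewrite Rabs_right; lra).
  pose proof (GP_infinite r H) as G.
  assert (has_sum (fun k => 1 * r ^ k) (/ (1 - r))) by exact G.
  apply (has_sum_ext (fun k => M * (1 * r ^ k))). intro; ring.
  unfold Rdiv. apply has_sum_scal. auto.
Qed.

Lemma gen_series A T b eps t s (h : Z -> R) K0 F z y :
  hyp A T b eps t s -> 0 <= K0 -> 0 <= F ->
  (forall w, Rabs (h w) <= K0 * F * exp (- ((b + beta0 A T) * s * Rabs (IZR w)))) ->
  (0 <= z)%Z -> (0 <= y)%Z ->
  exists l, has_sum (fun k => h (z + y + Z.of_nat (k + 2))%Z * muA A eps ^ (k + 2)) l /\
    Rabs (1 - / muA A eps ^ 2) * Rabs l <= 20 * Rabs A * K0 * F * exp (- (b * s * Rabs (IZR z - IZR y))).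
Proof.
  intros [hT [hb [heps [hAe [ht [hsp hes]]]]]] hK hF Hh hz hy.
  pose proof hsp as [hs [hts _]].
  set (mu := muA A eps). set (be := beta0 A T).
  assert (hmu : 1/2 <= mu <= 3/2) by (unfold mu, muA; pose proof (Rabs_ge A); nra).
  assert (hmu1 : Rabs (mu - 1) = Rabs A * eps) by (unfold mu, muA; replace (1 - A * eps - 1) with (- (A * eps)) by ring; rewrite Rabs_Ropp, Rabs_mult, (Rabs_right eps); lra).
  set (r := exp (- (be * s)) * mu).
  assert (hbe : (Rabs A + 1) * eps <= be * s) by (unfold be, beta0; pose proof (Rabs_pos A); nra).
  assert (hr1 : r <= exp (- eps)).
  { unfold r. pose proof (exp_ineq1_le (- (A * eps))).
    assert (mu <= exp (- (A * eps))) by (unfold mu, muA; lra).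
    apply Rle_trans with (exp (- (be * s)) * exp (- (A * eps))).
    apply Rmult_le_compat_l. left; apply exp_pos. auto.
    rewrite <- exp_plus. apply exp_le_exp. pose proof (Rabs_ge A). nra. }
  assert (hr0 : 0 <= r) by (unfold r; pose proof (exp_pos (- (be * s))); nra).
  assert (he1 : exp (- eps) <= 1 - eps / 2).
  { rewrite exp_Ropp. pose proof (exp_ineq1_le eps). pose proof (exp_pos eps).
    apply (Rmult_le_reg_r (exp eps)); auto. rewrite Rinv_l by lra. nra. }
  set (E := exp (- (b * s * Rabs (IZR z - IZR y)))).
  assert (hE : 0 < E) by apply exp_pos.
  assert (Hterm : forall k, Rabs (h (z + y + Z.of_nat (k + 2))%Z * mu ^ (k + 2)) <= K0 * F * E * r ^ k).
  { intro k. rewrite Rabs_mult. set (w := (z + y + Z.of_nat (k + 2))%Z).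
    assert (hw : Rabs (IZR w) = IZR z + IZR y + INR k + 2).
    { unfold w. rewrite !plus_IZR, <- INR_IZR_INZ, plus_INR. simpl (INR 2).
      apply IZR_le in hz. apply IZR_le in hy. pose proof (pos_INR k). rewrite Rabs_right; lra. }
    pose proof (Hh w) as Hw. rewrite hw in Hw.
    rewrite (Rabs_right (mu ^ (k+2))) by (apply Rle_ge, pow_le; lra).
    assert (hzy : Rabs (IZR z - IZR y) <= IZR z + IZR y).
    { apply IZR_le in hz. apply IZR_le in hy. apply Rabs_le. lra. }
    assert (Hex : exp (- ((b + be) * s * (IZR z + IZR y + INR k + 2))) <= E * exp (- (be * s)) ^ (k + 2)).
    { unfold E. rewrite exp_pow_INR, <- exp_plus. apply exp_le_exp.
      rewrite plus_INR. simpl (INR 2). pose proof (pos_INR k).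
      apply IZR_le in hz. apply IZR_le in hy.
      assert (0 <= be * s) by (pose proof (Rabs_pos A); nra). 
      assert (b * s * Rabs (IZR z - IZR y) <= b * s * (IZR z + IZR y + INR k + 2)).
      { apply Rmult_le_compat_l. nra. lra. }
      assert (be * s * (INR k + 2) <= be * s * (IZR z + IZR y + INR k + 2)).
      { apply Rmult_le_compat_l; lra. }
      nra. }
    assert (Hr : exp (- (be * s)) ^ (k + 2) * mu ^ (k + 2) <= r ^ k).
    { rewrite <- Rpow_mult_distr. fold r. rewrite pow_add.
      assert (r ^ 2 <= 1) by (assert (r < 1) by (pose proof (exp_pos (-eps)); assert (exp (- eps) < 1) by (rewrite exp_Ropp; pose proof (exp_ineq1 eps ltac:(lra)); apply (Rmult_lt_reg_r (exp eps)); [apply exp_pos| rewrite Rinv_l by (pose proof (exp_pos eps); lra); lra]); lra); nra).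
      pose proof (pow_le r k hr0). nra. }
    apply Rle_trans with (K0 * F * exp (- ((b + be) * s * (IZR z + IZR y + INR k + 2))) * mu ^ (k + 2)).
    apply Rmult_le_compat_r. apply pow_le; lra. auto.
    assert (0 <= K0 * F) by nra. pose proof (pow_le mu (k+2) ltac:(lra)).
    apply Rle_trans with (K0 * F * (E * exp (- (be * s)) ^ (k + 2)) * mu ^ (k + 2)).
    apply Rmult_le_compat_r; auto. apply Rmult_le_compat_l; auto.
    replace (K0 * F * (E * exp (- (be * s)) ^ (k + 2)) * mu ^ (k + 2)) with
      ((K0 * F * E) * (exp (- (be * s)) ^ (k + 2) * mu ^ (k + 2))) by ring.
    apply Rmult_le_compat_l; auto. nra. }
  assert (hrl : r < 1) by lra.
  destruct (abs_conv _ _ _ Hterm (geo_sum r (K0 * F * E) ltac:(lra))) as [l [Hl Hlb]].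
  exists l. split. exact Hl.
  assert (hc : Rabs (1 - / mu ^ 2) <= 10 * Rabs A * eps).
  { replace (1 - / mu ^ 2) with ((mu - 1) * (mu + 1) / mu ^ 2) by (field; lra).
    unfold Rdiv. rewrite !Rabs_mult. rewrite hmu1.
    rewrite (Rabs_right (mu + 1)) by lra. rewrite (Rabs_right (/ mu ^ 2)).
    2: { apply Rle_ge. left. apply Rinv_0_lt_compat. nra. }
    assert (/ mu ^ 2 <= 4).
    { replace 4 with (/ (1/4)) by field. apply Rinv_le_contravar. lra. nra. }
    assert (0 <= Rabs A * eps) by (pose proof (Rabs_pos A); nra).
    assert (0 <= / mu ^ 2) by (left; apply Rinv_0_lt_compat; nra).
    apply Rle_trans with (Rabs A * eps * (5/2) * 4). 
    apply Rmult_le_compat; try lra. apply Rmult_le_pos; lra.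
    apply Rmult_le_compat_l; lra. apply Req_le; field. }
  assert (0 <= K0 * F * E) by (apply Rmult_le_pos; nra).
  assert (h1r : eps / 2 <= 1 - r) by lra.
  assert (Rabs l * (1 - r) <= K0 * F * E).
  { apply (Rmult_le_compat_r (1 - r)) in Hlb; [|lra]. unfold Rdiv in Hlb.
    rewrite Rmult_assoc, Rinv_l in Hlb by lra. lra. }
  fold E. pose proof (Rabs_pos l). pose proof (Rabs_pos A).
  apply Rle_trans with (10 * Rabs A * eps * Rabs l).
  apply Rmult_le_compat_r; auto.
  assert (eps * Rabs l <= 2 * (K0 * F * E)) by nra.
  replace (20 * Rabs A * K0 * F * E) with (10 * Rabs A * (2 * (K0 * F * E))) by ring.
  replace (10 * Rabs A * eps * Rabs l) with (10 * Rabs A * (eps * Rabs l)) by ring.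
  apply Rmult_le_compat_l; lra.
Qed.


Lemma Rabs_triang3 a b c : Rabs (a + b + c) <= Rabs a + Rabs b + Rabs c.
Proof. eapply Rle_trans. apply Rabs_triang. pose proof (Rabs_triang a b). lra. Qed.

Lemma exp_dist_mono b s u v : 0 <= b -> 0 <= s -> u <= v -> exp (- (b * s * v)) <= exp (- (b * s * u)).
Proof. intros. apply exp_le_exp. assert (0 <= b * s) by nra. nra. Qed.

Lemma abs_zy1 z y : (0 <= z)%Z -> (0 <= y)%Z -> Rabs (IZR z - IZR y) <= Rabs (IZR (z + y + 1)).
Proof.
  intros hz hy. apply IZR_le in hz. apply IZR_le in hy. rewrite !plus_IZR.
  rewrite (Rabs_right (IZR z + IZR y + 1)) by lra. apply Rabs_le. lra.
Qed.

Lemma beta0_nonneg A T : 0 < T -> 0 <= beta0 A T.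
Proof. intros. unfold beta0. pose proof (Rabs_pos A). nra. Qed.

Lemma R0 A T b : 0 < T -> 0 <= b -> exists K, 0 <= K /\ forall eps t s z y,
  hyp A T b eps t s -> (0 <= z)%Z -> (0 <= y)%Z ->
  Rabs (robin A eps t z y) <= K * s * exp (- (b * s * Rabs (IZR z - IZR y))).
Proof.
  intros hT hb.
  destruct (H0s b hb) as [Kb [hKb HKb]].
  destruct (H0s (b + beta0 A T) ltac:(pose proof (beta0_nonneg A T hT); lra)) as [Kbb [hKbb HKbb]].
  exists (3 * Kb + 20 * Rabs A * Kbb). split. pose proof (Rabs_pos A). nra.
  intros eps t s z y H hz hy.
  pose proof H as [_ [_ [heps [hAe [ht [hsp hes]]]]]]. pose proof hsp as [hs _].
  destruct (gen_series A T b eps t s (heat t) Kbb s z y H ltac:(lra) ltac:(lra)) as [l [Hl Hlb]]; auto.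
  { intro w. rewrite Rabs_right by (apply Rle_ge, heat_nonneg; auto). apply HKbb; auto. }
  unfold robin. cbv zeta. rewrite (series_eq _ l Hl).
  set (E := exp (- (b * s * Rabs (IZR z - IZR y)))).
  set (mu := muA A eps) in *.
  assert (hmu : 1/2 <= mu <= 3/2) by (unfold mu, muA; pose proof (Rabs_ge A); nra).
  eapply Rle_trans. apply Rabs_triang3.
  assert (h1 : Rabs (heat t (z - y)) <= Kb * s * E).
  { rewrite Rabs_right by (apply Rle_ge, heat_nonneg; auto). unfold E. rewrite <- minus_IZR. apply HKb; auto. }
  assert (h2 : Rabs (mu * heat t (z + y + 1)) <= 3/2 * (Kb * s * E)).
  { rewrite Rabs_mult, (Rabs_right mu) by lra. rewrite Rabs_right by (apply Rle_ge, heat_nonneg; auto).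
    pose proof (heat_nonneg t (z + y + 1) ht).
    apply Rmult_le_compat; try lra. eapply Rle_trans. apply (HKb t s); auto.
    apply Rmult_le_compat_l. nra. unfold E. apply exp_dist_mono; try lra. apply abs_zy1; auto. }
  fold E in Hlb. rewrite (Rabs_mult (1 - / mu ^ 2)).
  assert (0 <= Kb * s * E) by (unfold E; apply Rmult_le_pos; [apply Rmult_le_pos; lra| left; apply exp_pos]).
  replace ((3 * Kb + 20 * Rabs A * Kbb) * s * E) with (Kb * s * E + 2 * (Kb * s * E) + 20 * Rabs A * Kbb * s * E) by field.
  lra.
Qed.

Lemma R1 A T b : 0 < T -> 0 <= b -> exists K, 0 <= K /\ forall eps t s z y,
  hyp A T b eps t s -> (0 <= z)%Z -> (0 <= y)%Z ->
  Rabs (robin A eps t (z + 1) y - robin A eps t z y) <= K * s ^ 2 * exp (- (b * s * Rabs (IZR z - IZR y))).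
Proof.
  intros hT hb. pose proof (beta0_nonneg A T hT) as hb0.
  destruct (H0s (b + beta0 A T) ltac:(lra)) as [Kbb [hKbb HKbb]].
  destruct (H1s b hb) as [K1 [hK1 HK1]].
  destruct (H1s (b + beta0 A T) ltac:(lra)) as [K1b [hK1b HK1b]].
  exists (3 * K1 + 20 * Rabs A * K1b). split. pose proof (Rabs_pos A). nra.
  intros eps t s z y H hz hy.
  pose proof H as [_ [_ [heps [hAe [ht [hsp hes]]]]]]. pose proof hsp as [hs _].
  assert (Hh : forall w, Rabs (heat t w) <= Kbb * s * exp (- ((b + beta0 A T) * s * Rabs (IZR w)))).
  { intro w. rewrite Rabs_right by (apply Rle_ge, heat_nonneg; auto). apply HKbb; auto. }
  destruct (gen_series A T b eps t s (heat t) Kbb s z y H ltac:(lra) ltac:(lra) Hh hz hy) as [l0 [Hl0 _]].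
  destruct (gen_series A T b eps t s (heat t) Kbb s (z + 1) y H ltac:(lra) ltac:(lra) Hh ltac:(lia) hy) as [l1 [Hl1 _]].
  destruct (gen_series A T b eps t s (fun w => heat t (w + 1) - heat t w) K1b (s ^ 2) z y H ltac:(lra) ltac:(nra)) as [l' [Hl' Hlb]]; auto.
  assert (El : l' = l1 - l0).
  { apply (has_sum_unique _ _ _ Hl'). 
    apply (has_sum_ext (fun k => heat t ((z + 1) + y + Z.of_nat (k + 2))%Z * muA A eps ^ (k + 2) - heat t (z + y + Z.of_nat (k + 2))%Z * muA A eps ^ (k + 2))).
    intro k. replace ((z + 1) + y + Z.of_nat (k + 2))%Z with ((z + y + Z.of_nat (k + 2)) + 1)%Z by ring. ring.
    apply has_sum_minus; auto. }
  unfold robin. cbv zeta. rewrite (series_eq _ l0 Hl0), (series_eq _ l1 Hl1).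
  set (E := exp (- (b * s * Rabs (IZR z - IZR y)))).
  set (mu := muA A eps) in *.
  assert (hmu : 1/2 <= mu <= 3/2) by (unfold mu, muA; pose proof (Rabs_ge A); nra).
  replace (heat t (z + 1 - y) + mu * heat t (z + 1 + y + 1) + (1 - / mu ^ 2) * l1 -
     (heat t (z - y) + mu * heat t (z + y + 1) + (1 - / mu ^ 2) * l0))
   with ((heat t ((z - y) + 1) - heat t (z - y)) + mu * (heat t ((z + y + 1) + 1) - heat t (z + y + 1)) + (1 - / mu ^ 2) * l').
  2: { rewrite El. replace (z + 1 - y)%Z with (z - y + 1)%Z by ring.
       replace (z + 1 + y + 1)%Z with (z + y + 1 + 1)%Z by ring. ring. }
  eapply Rle_trans. apply Rabs_triang3.
  assert (h1 : Rabs (heat t (z - y + 1) - heat t (z - y)) <= K1 * s ^ 2 * E).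
  { unfold E. rewrite <- minus_IZR. apply HK1; auto. }
  assert (h2 : Rabs (mu * (heat t (z + y + 1 + 1) - heat t (z + y + 1))) <= 2 * (K1 * s ^ 2 * E)).
  { rewrite Rabs_mult, (Rabs_right mu) by lra.
    pose proof (Rabs_pos (heat t (z + y + 1 + 1) - heat t (z + y + 1))).
    apply Rmult_le_compat; try lra. eapply Rle_trans. apply (HK1 t s); auto.
    apply Rmult_le_compat_l. assert (0 <= s ^ 2) by apply pow2_ge_0. nra.
    unfold E. apply exp_dist_mono; try lra. apply abs_zy1; auto. }
  fold E in Hlb. rewrite (Rabs_mult (1 - / mu ^ 2)).
  assert (0 <= K1 * s ^ 2 * E) by (unfold E; pose proof (exp_pos (- (b * s * Rabs (IZR z - IZR y)))); assert (0 <= s ^ 2) by apply pow2_ge_0; apply Rmult_le_pos; nra).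
  replace ((3 * K1 + 20 * Rabs A * K1b) * s ^ 2 * E) with (K1 * s ^ 2 * E + 2 * (K1 * s ^ 2 * E) + 20 * Rabs A * K1b * s ^ 2 * E) by field.
  lra.
Qed.


Lemma exp_lt1 x : x < 0 -> exp x < 1.
Proof. intro h. rewrite <- exp_0. apply exp_increasing. auto. Qed.

Lemma exp_le1 x : x <= 0 -> exp x <= 1.
Proof. intro h. rewrite <- exp_0. apply exp_le_exp. auto. Qed.

Lemma s_sprop t : 0 <= t -> sprop (min1_negpow t (1/2)) t.
Proof.
  intro ht. unfold min1_negpow, sprop. destruct (Rlt_dec 0 t) as [h|h].
  - unfold Rpower. set (L := ln t).
    assert (Et : t = exp L) by (unfold L; rewrite exp_ln; auto).
    destruct (Rle_dec L 0) as [hL|hL].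
    + assert (1 <= exp (- (1/2) * L)) by (pose proof (exp_ineq1_le (- (1/2) * L)); lra).
      rewrite Rmin_left by lra.
      assert (t <= 1) by (rewrite Et; apply exp_le1; auto). split; [lra|]. split; [lra|]. left; auto.
    + assert (exp (- (1/2) * L) < 1) by (apply exp_lt1; lra).
      rewrite Rmin_right by lra.
      assert (E : t * exp (- (1/2) * L) ^ 2 = 1).
      { rewrite Et. rewrite exp_pow_INR. rewrite <- exp_plus. replace (L + INR 2 * (- (1/2) * L)) with 0 by (simpl; field). apply exp_0. }
      pose proof (exp_pos (- (1/2) * L)). split; [lra|]. split; [lra|]. right; auto.
  - assert (t = 0) by lra. subst. split; [lra|]. split; [lra|]. left; auto.
Qed.

Lemma eps_bound eps t s T : 0 < eps <= 1 -> 0 < T -> 0 <= t <= T / eps ^ 2 -> sprop s t -> eps <= s * (T + 1).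
Proof.
  intros he hT [ht1 ht2] [hs [hts hor]]. destruct hor as [e|e].
  - subst. lra.
  - assert (t * eps ^ 2 <= T).
    { apply (Rmult_le_compat_r (eps ^ 2)) in ht2. 2: nra.
      unfold Rdiv in ht2. rewrite Rmult_assoc, Rinv_l in ht2 by nra. lra. }
    assert (eps ^ 2 <= T * s ^ 2).
    { replace (eps ^ 2) with (t * eps ^ 2 * s ^ 2) by (replace (t * eps ^ 2 * s ^ 2) with (eps ^ 2 * (t * s ^ 2)) by ring; rewrite e; ring).
      apply Rmult_le_compat_r. nra. auto. }
    assert (eps ^ 2 <= (s * (T + 1)) ^ 2) by nra.
    assert (0 <= s * (T + 1)) by nra.
    destruct (Rle_dec eps (s * (T + 1))); auto. nra.
Qed.

Lemma m_bound t v N : 0 <= t -> 0 <= v <= 1 -> 1 <= N ->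
  min1_negpow t (1/2) * Rmin 1 (N * min1_negpow t (1/2)) <= min1_negpow t ((1 + v) / 2) * rpow N v.
Proof.
  intros ht hv hN. unfold rpow. destruct (Rlt_dec 0 N) as [_|hN']; [|lra].
  unfold Rpower. 
  assert (hNv : 1 <= exp (v * ln N)).
  { pose proof (exp_ineq1_le (v * ln N)). assert (0 <= ln N) by (destruct (Req_dec N 1) as [e1|e1]; [rewrite e1, ln_1; lra| left; rewrite <- ln_1; apply ln_increasing; lra]). nra. }
  unfold min1_negpow. destruct (Rlt_dec 0 t) as [h|h].
  - unfold Rpower. set (L := ln t).
    destruct (Rle_dec L 0) as [hL|hL].
    + assert (1 <= exp (- (1/2) * L)) by (pose proof (exp_ineq1_le (- (1/2) * L)); lra).
      assert (1 <= exp (- ((1 + v) / 2) * L)) by (pose proof (exp_ineq1_le (- ((1+v)/2) * L)); nra).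
      rewrite !Rmin_left by lra. 
      assert (Rmin 1 (N * 1) <= 1) by apply Rmin_l. lra.
    + assert (exp (- (1/2) * L) < 1) by (apply exp_lt1; lra).
      assert (exp (- ((1 + v) / 2) * L) < 1) by (apply exp_lt1; nra).
      rewrite !(Rmin_right 1 (exp _)) by lra.
      set (u := ln N - 1/2 * L).
      assert (EN : N * exp (- (1/2) * L) = exp u) by (unfold u; rewrite <- (exp_ln N) at 1 by lra; rewrite <- exp_plus; f_equal; field).
      rewrite EN.
      assert (ER : exp (- ((1 + v) / 2) * L) * exp (v * ln N) = exp (- (1/2) * L) * exp (v * u)).
      { rewrite <- !exp_plus. f_equal. unfold u. field. }
      rewrite ER. apply Rmult_le_compat_l. left; apply exp_pos.
      destruct (Rle_dec 0 u).
      * eapply Rle_trans. apply Rmin_l. pose proof (exp_ineq1_le (v * u)). nra.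
      * eapply Rle_trans. apply Rmin_r. apply exp_le_exp. nra.
  - assert (Rmin 1 (N * 1) <= 1) by apply Rmin_l. lra.
Qed.

Lemma telescope (f : Z -> R) lo m B :
  (forall j : nat, (j < m)%nat -> Rabs (f (lo + Z.of_nat j + 1)%Z - f (lo + Z.of_nat j)%Z) <= B) ->
  Rabs (f (lo + Z.of_nat m)%Z - f lo) <= INR m * B.
Proof.
  induction m; intros H.
  - simpl. replace (lo + 0)%Z with lo by ring. rewrite Rminus_diag, Rabs_R0. lra.
  - rewrite S_INR. 
    replace (f (lo + Z.of_nat (S m))%Z - f lo) with
      ((f (lo + Z.of_nat m + 1)%Z - f (lo + Z.of_nat m)%Z) + (f (lo + Z.of_nat m)%Z - f lo))
      by (replace (lo + Z.of_nat (S m))%Z with (lo + Z.of_nat m + 1)%Z by lia; ring).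
    eapply Rle_trans. apply Rabs_triang.
    pose proof (H m ltac:(lia)). pose proof (IHm ltac:(intros; apply H; lia)). lra.
Qed.


Lemma Rabs_minus_le a b : Rabs (a - b) <= Rabs a + Rabs b.
Proof. unfold Rminus. eapply Rle_trans. apply Rabs_triang. rewrite Rabs_Ropp. lra. Qed.

Theorem mainTheorem5 (A T b : R) (hT : 0 < T) (hb : 0 <= b) :
  exists C : R, exists eps0 : R, 0 < eps0 /\
  forall eps : R, 0 < eps < eps0 ->
  forall t : R, 0 <= t <= T / (eps ^ 2) ->
  forall v : R, 0 <= v <= 1 ->
  forall x y : nat, forall n : Z,
  (b = 0 \/ (Z.abs n <= Zceil (sqrt t))%Z) ->
  (0 <= Z.of_nat x + n)%Z ->
  Rabs (robin A eps t (Z.of_nat x + n) (Z.of_nat y) - robin A eps t (Z.of_nat x) (Z.of_nat y))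
  <= C * min1_negpow t ((1 + v) / 2) * rpow (IZR (Z.abs n)) v
       * exp (- b * Rabs (INR x - INR y) * min1_negpow t (1 / 2)).
Proof.
  destruct (R0 A T b hT hb) as [K0 [hK0 HR0]].
  destruct (R1 A T b hT hb) as [K1 [hK1 HR1]].
  pose proof (Rabs_pos A) as hA.
  pose proof (exp_pos (2 * b)) as he2b.
  set (M := K0 * (exp (2 * b) + 1) + K1 * exp (2 * b)).
  assert (hM : 0 <= M) by (unfold M; nra).
  exists M, (Rmin 1 (/ (2 * (Rabs A + 1)))).
  split. { apply Rmin_pos; [lra| apply Rinv_0_lt_compat; lra]. }
  intros eps heps t ht v hv x y n hn hxn.
  assert (he1 : eps <= 1) by (pose proof (Rmin_l 1 (/ (2 * (Rabs A + 1)))); lra).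
  assert (hAe : Rabs A * eps <= 1/2).
  { pose proof (Rmin_r 1 (/ (2 * (Rabs A + 1)))).
    assert (eps * (2 * (Rabs A + 1)) < 1).
    { assert (hh := Rmult_lt_compat_r (2 * (Rabs A + 1)) _ _ ltac:(lra) (proj2 heps)).
      eapply Rlt_le_trans. apply hh.
      apply Rle_trans with (/ (2 * (Rabs A + 1)) * (2 * (Rabs A + 1))).
      apply Rmult_le_compat_r; lra. rewrite Rinv_l; lra. }
    nra. }
  pose proof (s_sprop t (proj1 ht)) as hsp.
  set (s := min1_negpow t (1/2)) in *.
  pose proof hsp as [hs [hts _]].
  pose proof (eps_bound eps t s T ltac:(lra) hT ht hsp) as hes.
  assert (H : hyp A T b eps t s) by exact (conj hT (conj hb (conj (conj (proj1 heps) he1) (conj hAe (conj (proj1 ht) (conj hsp hes)))))).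
  set (X := Z.of_nat x) in *. set (Y := Z.of_nat y) in *.
  set (E := exp (- (b * s * Rabs (IZR X - IZR Y)))).
  assert (hE : 0 < E) by apply exp_pos.
  assert (HE : exp (- b * Rabs (INR x - INR y) * s) = E).
  { unfold E, X, Y. rewrite <- !INR_IZR_INZ. f_equal. ring. }
  rewrite HE.
  assert (hX : (0 <= X)%Z) by (unfold X; lia). assert (hY : (0 <= Y)%Z) by (unfold Y; lia).
  assert (hm0 : 0 <= min1_negpow t ((1 + v) / 2)).
  { unfold min1_negpow. destruct (Rlt_dec 0 t). apply Rmin_glb. lra. left; apply exp_pos. lra. }
  destruct (Z.eq_dec n 0) as [n0|n0].
  { subst n. rewrite Z.add_0_r, Rminus_diag, Rabs_R0.
    assert (0 <= rpow (IZR (Z.abs 0)) v).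
    { unfold rpow. destruct (Rlt_dec 0 (IZR (Z.abs 0))). left; apply exp_pos. destruct (Req_EM_T v 0); lra. }
    apply Rmult_le_pos; [|lra]. apply Rmult_le_pos; auto. apply Rmult_le_pos; auto. }
  set (N := IZR (Z.abs n)).
  assert (hN : 1 <= N) by (unfold N; apply IZR_le; lia).
  assert (hbn : b * s * N <= 2 * b).
  { destruct hn as [hb0|hc].
    - rewrite hb0. lra.
    - apply IZR_le in hc. pose proof (Zceil_bound (sqrt t)) as [hc1 _].
      assert (hsq : s * sqrt t <= 1).
      { pose proof (sqrt_pos t). assert ((s * sqrt t) ^ 2 <= 1).
        { replace ((s * sqrt t) ^ 2) with (s ^ 2 * (sqrt t * sqrt t)) by ring.
          rewrite sqrt_sqrt by lra. lra. }
        nra. }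
      fold N in hc. assert (N * s <= 2) by nra. nra. }
  assert (Shift : forall z, (0 <= z)%Z -> Rabs (IZR z - IZR X) <= N ->
     exp (- (b * s * Rabs (IZR z - IZR Y))) <= E * exp (2 * b)).
  { intros z hz hzx. unfold E. rewrite <- exp_plus. apply exp_le_exp.
    assert (Rabs (IZR X - IZR Y) <= Rabs (IZR z - IZR Y) + Rabs (IZR z - IZR X)).
    { replace (IZR X - IZR Y) with ((IZR z - IZR Y) - (IZR z - IZR X)) by ring. apply Rabs_minus_le. }
    assert (0 <= b * s) by nra.
    assert (b * s * Rabs (IZR z - IZR X) <= b * s * N) by (apply Rmult_le_compat_l; auto).
    assert (b * s * Rabs (IZR X - IZR Y) <= b * s * Rabs (IZR z - IZR Y) + b * s * Rabs (IZR z - IZR X)).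
    { rewrite <- Rmult_plus_distr_l. apply Rmult_le_compat_l; auto. }
    lra. }
  (* v = 0 bound *)
  assert (B0 : Rabs (robin A eps t (X + n) Y - robin A eps t X Y) <= K0 * (exp (2 * b) + 1) * s * E).
  { eapply Rle_trans. apply Rabs_minus_le.
    pose proof (HR0 eps t s (X + n)%Z Y H hxn hY) as h1.
    pose proof (HR0 eps t s X Y H hX hY) as h2. fold E in h2.
    assert (exp (- (b * s * Rabs (IZR (X + n) - IZR Y))) <= E * exp (2 * b)).
    { apply Shift; auto. rewrite plus_IZR. replace (IZR X + IZR n - IZR X) with (IZR n) by ring.
      unfold N. rewrite abs_IZR. lra. }
    assert (K0 * s * exp (- (b * s * Rabs (IZR (X + n) - IZR Y))) <= K0 * s * (E * exp (2 * b))).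
    { apply Rmult_le_compat_l; auto. nra. }
    nra. }
  (* v = 1 bound *)
  assert (B1 : Rabs (robin A eps t (X + n) Y - robin A eps t X Y) <= N * (K1 * exp (2 * b) * s ^ 2 * E)).
  { set (f := fun z => robin A eps t z Y).
    assert (Step : forall z, (0 <= z)%Z -> Rabs (IZR z - IZR X) <= N ->
       Rabs (f (z + 1)%Z - f z) <= K1 * exp (2 * b) * s ^ 2 * E).
    { intros z hz hzx. unfold f. eapply Rle_trans. apply (HR1 eps t s z Y H hz hY).
      pose proof (Shift z hz hzx). assert (0 <= K1 * s ^ 2) by (apply Rmult_le_pos; [lra| apply pow2_ge_0]).
      apply Rle_trans with (K1 * s ^ 2 * (E * exp (2 * b))). apply Rmult_le_compat_l; auto.
      right; ring. }
    assert (HmN : INR (Z.abs_nat n) = N) by (unfold N; rewrite INR_abs_nat, abs_IZR; auto).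
    destruct (Z_le_gt_dec 0 n) as [hpos|hneg].
    - assert (En : (X + n)%Z = (X + Z.of_nat (Z.abs_nat n))%Z) by lia.
      change (Rabs (f (X + n)%Z - f X) <= N * (K1 * exp (2 * b) * s ^ 2 * E)).
      rewrite En, <- HmN. apply telescope.
      intros j hj. apply Step. lia.
      rewrite plus_IZR. replace (IZR X + IZR (Z.of_nat j) - IZR X) with (IZR (Z.of_nat j)) by ring.
      rewrite <- INR_IZR_INZ, Rabs_right by (apply Rle_ge, pos_INR). rewrite <- HmN. apply le_INR. lia.
    - assert (En : X = ((X + n) + Z.of_nat (Z.abs_nat n))%Z) by lia.
      change (Rabs (f (X + n)%Z - f X) <= N * (K1 * exp (2 * b) * s ^ 2 * E)).
      rewrite Rabs_minus_sym. rewrite En at 1. rewrite <- HmN. apply telescope.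
      intros j hj. apply Step. lia.
      rewrite !plus_IZR. rewrite <- INR_IZR_INZ. 
      assert (IZR n = - INR (Z.abs_nat n)).
      { rewrite INR_IZR_INZ, Nat2Z.inj_abs_nat, Z.abs_neq by lia. rewrite opp_IZR. ring. }
      replace (IZR X + IZR n + INR j - IZR X) with (IZR n + INR j) by ring.
      rewrite H0. apply le_INR in hj. rewrite S_INR in hj. pose proof (pos_INR j).
      rewrite <- HmN. apply Rabs_le. lra. }
  assert (Comb : Rabs (robin A eps t (X + n) Y - robin A eps t X Y) <= M * E * (s * Rmin 1 (N * s))).
  { destruct (Rle_dec 1 (N * s)) as [h1|h1].
    - rewrite Rmin_left by lra. eapply Rle_trans. apply B0. unfold M.
      assert (0 <= K1 * exp (2 * b) * s * E) by (apply Rmult_le_pos; [apply Rmult_le_pos|]; nra).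
      nra.
    - rewrite Rmin_right by lra. eapply Rle_trans. apply B1. unfold M.
      assert (0 <= K0 * (exp (2 * b) + 1) * E * (s * (N * s))).
      { apply Rmult_le_pos. apply Rmult_le_pos; nra. nra. }
      replace (N * (K1 * exp (2 * b) * s ^ 2 * E)) with (K1 * exp (2 * b) * E * (s * (N * s))) by ring.
      nra. }
  pose proof (m_bound t v N (proj1 ht) hv hN) as Hm. fold s in Hm.
  eapply Rle_trans. apply Comb.
  assert (0 <= M * E) by nra.
  apply Rle_trans with (M * E * (min1_negpow t ((1 + v) / 2) * rpow N v)).
  apply Rmult_le_compat_l; auto. right. fold N. ring.
Qed.
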